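(* Let $n,r\ge 1$ be integers. If $G(n,r)$ has a vertex $v$ all of whose positive entries equal $1$, then the maximum degree of $G(n,r)$ satisfies $\Delta(G(n,r))=d(v)=\frac{nr(nr-2r+1)}{2}$.
   Context: For integers $n,r\ge 1$, $G(n,r)$ is the simple undirected graph whose vertices are the $n\times n$ matrices with non-negative integer entries all of whose row sums and column sums equal $r$. Let $e_{ij}$ be the $n\times n$ matrix with a $1$ in position $(i,j)$ and $0$ elsewhere, and let $\mathcal{B}=\{\pm(e_{ij}+e_{kl}-e_{il}-e_{kj}) : 1\le i<k\le n,\ 1\le j<l\le n\}$. Two vertices $u,v$ are adjacent iff $u-v\in\mathcal{B}$. $d(v)$ denotes the degree of $v$ and $\Delta(G)$ the maximum degree of $G$. *)

(* Defs.v *)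
From HB Require Import structures.
From mathcomp Require Import all_boot all_order all_algebra.
Unset Printing Implicit Defensive.
Import Order.TTheory GRing.Theory Num.Theory.

Definition is_vertex (n r : nat) (A : 'M[nat]_n) : bool :=
  [forall i : 'I_n, \sum_(j < n) A i j == r] &&
  [forall j : 'I_n, \sum_(i < n) A i j == r].

Definition e (n : nat) (i j : 'I_n) : 'M[int]_n := delta_mx i j.

Definition inB (n : nat) (M : 'M[int]_n) : bool :=
  [exists i : 'I_n, exists k : 'I_n, exists j : 'I_n, exists l : 'I_n,
     [&& (i < k)%N, (j < l)%N &
        let b := (@e n i j + @e n k l - @e n i l - @e n k j)%R in
        (M == b) || (M == (- b)%R)]].

Definition toZ (n : nat) (A : 'M[nat]_n) : 'M[int]_n := map_mx Posz A.

Definition adj (n : nat) (u v : 'M[nat]_n) : bool :=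
  @inB n (@toZ n u - @toZ n v)%R.

(* Every vertex of G(n,r) has entries <= r, so the vertex set is faithfully
   enumerated by the finite type of matrices with entries in 'I_r.+1. *)
Definition emb (n r : nat) (A : 'M['I_r.+1]_n) : 'M[nat]_n :=
  map_mx (@nat_of_ord r.+1) A.

Definition deg (n r : nat) (v : 'M[nat]_n) : nat :=
  #|[set u : 'M['I_r.+1]_n | is_vertex n r (@emb n r u) && @adj n (@emb n r u) v]|.

Definition maxdeg (n r : nat) : nat :=
  \max_(u : 'M['I_r.+1]_n | is_vertex n r (@emb n r u)) deg n r (@emb n r u).

(* Main.v *)
Require Import Defs.
From HB Require Import structures.
From mathcomp Require Import all_boot all_order all_algebra.
From mathcomp Require Import zify ring lra.
Import Order.TTheory GRing.Theory Num.Theory.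
Set Implicit Arguments. Unset Strict Implicit.
Local Open Scope ring_scope.
Local Notation tZ A := (@toZ _ A).
Local Notation emb' A := (@emb _ _ A).
Definition Mq n (x y : 'I_n * 'I_n) : 'M[int]_n :=
  @e n x.1 y.2 + @e n y.1 x.2 - @e n x.1 x.2 - @e n y.1 y.2.
Arguments Mq {n}.
Lemma Mq_entry n (x y : 'I_n * 'I_n) (a b : 'I_n) :
  @Mq n x y a b = ((a == x.1) && (b == y.2))%:R + ((a == y.1) && (b == x.2))%:R
     - ((a == x.1) && (b == x.2))%:R - ((a == y.1) && (b == y.2))%:R.
Proof. by rewrite /Mq /e !mxE. Qed.

Arguments Mq_entry {n}.
Lemma Mq_x n (x y : 'I_n * 'I_n) : x.1 != y.1 -> x.2 != y.2 ->
  @Mq n x y x.1 x.2 = -1.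
Proof.
move=> h1 h2; rewrite Mq_entry !eqxx /= (negbTE h1) (negbTE h2) andbF.
by rewrite /=; lia.
Qed.

Lemma Mq_y n (x y : 'I_n * 'I_n) : x.1 != y.1 -> x.2 != y.2 ->
  @Mq n x y y.1 y.2 = -1.
Proof.
move=> h1 h2; rewrite Mq_entry !eqxx /= eq_sym (negbTE h1) eq_sym (negbTE h2) /=.
by rewrite /=; lia.
Qed.

Lemma Mq_neg n (x y : 'I_n * 'I_n) a b :
  @Mq n x y a b = -1 -> (a, b) = x \/ (a, b) = y.
Proof.
rewrite Mq_entry.
case: x y => [x1 x2] [y1 y2] /=.
have [hx|hx] := eqVneq (a,b) (x1,x2); first by left.
have [hy|hy] := eqVneq (a,b) (y1,y2); first by right.
move: hx hy; rewrite !xpair_eqE => /negbTE -> /negbTE ->.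
case: (_ && _); case: (_ && _); rewrite /=; lia.
Qed.

Lemma Mq_inj n (x y x' y' : 'I_n * 'I_n) : (x.1 < y.1)%N -> x.2 != y.2 ->
  (x'.1 < y'.1)%N -> x'.2 != y'.2 -> Mq x y = Mq x' y' -> x = x' /\ y = y'.
Proof.
move=> h1 h2 h1' h2' E.
have n1 : x.1 != y.1 by rewrite neq_ltn h1.
have hx := (@Mq_x n x y n1 h2); have hy := (@Mq_y n x y n1 h2).
rewrite E in hx hy.
case: (@Mq_neg n _ _ _ _ hx) => ex; case: (@Mq_neg n _ _ _ _ hy) => ey;
  rewrite -!surjective_pairing in ex ey; subst.
- by move: h1; rewrite ltnn.
- by [].
- move: h1 h1'; lia.
- by move: h1; rewrite ltnn.
Qed.

Definition pos n (w : 'M[nat]_n) (x : 'I_n * 'I_n) : bool := (0 < w x.1 x.2)%N.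
Arguments pos {n}.
Definition Dset n (w : 'M[nat]_n) :=
  [set q : ('I_n * 'I_n) * ('I_n * 'I_n) |
    [&& (q.1.1 < q.2.1)%N, q.1.2 != q.2.2, pos w q.1 & pos w q.2]].
Arguments Dset {n}.
Definition gq n (w : 'M[nat]_n) (q : ('I_n * 'I_n) * ('I_n * 'I_n)) : 'M[nat]_n :=
  map_mx absz (tZ w + Mq q.1 q.2).
Arguments gq {n}.

Lemma sumZ n (F : 'I_n -> nat) : (\sum_(i < n) F i)%:Z = \sum_(i < n) (F i)%:Z.
Proof. by rewrite -natz natr_sum; apply: eq_bigr => i _; rewrite natz. Qed.

Lemma vertexZ n r (A : 'M[nat]_n) : is_vertex n r A =
  [forall i, \sum_j tZ A i j == r%:Z] && [forall j, \sum_i tZ A i j == r%:Z].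
Proof.
rewrite /is_vertex; congr andb; apply: eq_forallb => i;
rewrite -eqz_nat sumZ; congr (_ == _); apply: eq_bigr => j _; by rewrite mxE.
Qed.

Lemma toZ_gq n (w : 'M[nat]_n) q : q \in Dset w -> tZ (gq w q) = tZ w + Mq q.1 q.2.
Proof.
case: q => [[i j] [k l]]; rewrite inE /pos /= => /and4P [h1 h2 h3 h4].
have ik : (i == k) = false by apply/negbTE; rewrite neq_ltn h1.
have ki : (k == i) = false by rewrite eq_sym.
have jl : (j == l) = false by apply/negbTE.
have lj : (l == j) = false by rewrite eq_sym.
apply/matrixP => a b; rewrite !mxE.
rewrite /=; apply: gez0_abs.
have [[-> ->]|hx] := eqVneq (a,b) (i,j).
  rewrite !eqxx /= jl ik /= ?andbF; lia.
have [[-> ->]|hy] := eqVneq (a,b) (k,l).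
  rewrite !eqxx /= lj ki /= ?andbF; lia.
move: hx hy; rewrite !xpair_eqE => /negbTE -> /negbTE ->.
case: (_ && _); case: (_ && _); rewrite /=; lia.
Qed.

Lemma sum_ind_r n (a i l : 'I_n) :
  \sum_(b < n) (((a == i) && (b == l))%:R : int) = (a == i)%:R.
Proof.
rewrite (bigD1 l) //= eqxx andbT big1 ?addr0 // => b /negbTE ->.
by rewrite andbF.
Qed.

Lemma sum_ind_c n (b i l : 'I_n) :
  \sum_(a < n) (((a == i) && (b == l))%:R : int) = (b == l)%:R.
Proof.
rewrite (bigD1 i) //= eqxx big1 ?addr0 // => a /negbTE ->.
by [].
Qed.

Lemma sum_row_Mq n (x y : 'I_n * 'I_n) a : \sum_b Mq x y a b = 0.
Proof.
under eq_bigr do rewrite Mq_entry.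
rewrite !sumrB big_split /= !sum_ind_r; lia.
Qed.

Lemma sum_col_Mq n (x y : 'I_n * 'I_n) b : \sum_a Mq x y a b = 0.
Proof.
under eq_bigr do rewrite Mq_entry.
rewrite !sumrB big_split /= !sum_ind_c; lia.
Qed.

Lemma gq_vertex n r (w : 'M[nat]_n) q : is_vertex n r w -> q \in Dset w ->
  is_vertex n r (gq w q).
Proof.
move=> hw hq; move: hw; rewrite !vertexZ (toZ_gq hq) => /andP [/forallP hr /forallP hc].
apply/andP; split; apply/forallP => i.
  by under eq_bigr do rewrite mxE; rewrite big_split /= sum_row_Mq addr0 hr.
by under eq_bigr do rewrite mxE; rewrite big_split /= sum_col_Mq addr0 hc.
Qed.

Lemma vertex_le n r (A : 'M[nat]_n) a b : is_vertex n r A -> (A a b <= r)%N.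
Proof.
case/andP => /forallP /(_ a) /eqP <- _.
by rewrite (bigD1 b) //= leq_addr.
Qed.

Lemma adj_gq n (w : 'M[nat]_n) q : q \in Dset w -> adj n (gq w q) w.
Proof.
move=> hq; rewrite /adj toZ_gq // addrC addKr.
move: hq; case: q => [[i j] [k l]]; rewrite inE /pos /= => /and4P [h1 h2 h3 h4].
apply/existsP; exists i; apply/existsP; exists k.
case: (ltngtP j l) => hjl; last by move/val_inj: hjl h2 => ->; rewrite eqxx.
- apply/existsP; exists j; apply/existsP; exists l.
  rewrite h1 hjl /=; apply/orP; right; apply/eqP.
  apply/matrixP => a b; rewrite /Mq !mxE /=; lia.
- apply/existsP; exists l; apply/existsP; exists j.
  rewrite h1 hjl /=; apply/orP; left; apply/eqP.
  by apply/matrixP => a b; rewrite /Mq !mxE /=.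
Qed.

Definition fq n r (w : 'M[nat]_n) q : 'M['I_r.+1]_n := map_mx inord (@gq n w q).

Lemma emb_fq n r (w : 'M[nat]_n) q : is_vertex n r w -> q \in Dset w ->
  emb' (fq r w q) = gq w q.
Proof.
move=> hw hq; have hv := gq_vertex hw hq.
apply/matrixP => a b; rewrite [LHS]mxE [fq _ _ _ _ _]mxE inordK // ltnS.
exact: vertex_le hv.
Qed.

Lemma entry_pos n (A w : 'M[nat]_n) x y : tZ A = tZ w + Mq x y ->
  x.1 != y.1 -> x.2 != y.2 -> pos w x && pos w y.
Proof.
move=> E h1 h2.
have ex : tZ A x.1 x.2 = tZ w x.1 x.2 + Mq x y x.1 x.2 by rewrite E [LHS]mxE.
have ey : tZ A y.1 y.2 = tZ w y.1 y.2 + Mq x y y.1 y.2 by rewrite E [LHS]mxE.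
rewrite Mq_x // in ex; rewrite Mq_y // in ey.
move: ex ey; rewrite /pos !mxE; lia.
Qed.

Lemma deg_eq n r (w : 'M[nat]_n) : is_vertex n r w -> deg n r w = #|Dset w|.
Proof.
move=> hw; rewrite /deg.
have -> : [set u : 'M['I_r.+1]_n | is_vertex n r (emb' u) && adj n (emb' u) w]
    = fq r w @: Dset w.
  apply/setP => u; rewrite inE; apply/idP/imsetP.
  - case/andP => hu /existsP [i /existsP [k /existsP [j /existsP [l]]]].
    case/and3P => hik hjl /orP [] /eqP E.
    + have EM : tZ (emb' u) = tZ w + (tZ (emb' u) - tZ w) by rewrite addrC subrK.
      rewrite E in EM.
      have EM' : tZ (emb' u) = tZ w + Mq (i, l) (k, j) by exact: EM.
      have hik' : (i, l).1 != (k, j).1 by rewrite neq_ltn hik.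
      have hjl' : (i, l).2 != (k, j).2 by rewrite /= neq_ltn hjl orbT.
      have hp := entry_pos EM' hik' hjl'.
      exists ((i, l), (k, j)); first by rewrite inE /= hik hjl' /=.
      rewrite /fq /gq /= -EM'; apply/matrixP => a b; rewrite !mxE /=.
      by rewrite inord_val.
    + have EM : tZ (emb' u) = tZ w + (tZ (emb' u) - tZ w) by rewrite addrC subrK.
      rewrite E in EM.
      have EM' : tZ (emb' u) = tZ w + Mq (i, j) (k, l).
        rewrite EM; congr (_ + _); apply/matrixP => a b; rewrite /Mq !mxE /=; lia.
      have hik' : (i, j).1 != (k, l).1 by rewrite neq_ltn hik.
      have hjl' : (i, j).2 != (k, l).2 by rewrite /= neq_ltn hjl.
      have hp := entry_pos EM' hik' hjl'.
      exists ((i, j), (k, l)); first by rewrite inE /= hik hjl' /=.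
      rewrite /fq /gq /= -EM'; apply/matrixP => a b; rewrite !mxE /=.
      by rewrite inord_val.
  - case=> q hq ->; rewrite emb_fq // gq_vertex //=; exact: adj_gq.
rewrite card_in_imset // => q1 q2 h1 h2 E.
have E' : gq w q1 = gq w q2 by rewrite -(emb_fq hw h1) -(emb_fq hw h2) E.
have E2 : tZ (gq w q1) = tZ (gq w q2) by rewrite E'.
rewrite !toZ_gq // in E2; move/addrI: E2 => E2.
move: h1 h2 E2; rewrite !inE => /and4P [a1 b1 _ _] /and4P [a2 b2 _ _] E2.
case: (Mq_inj a1 b1 a2 b2 E2) => e1 e2.
by rewrite [q1]surjective_pairing [q2]surjective_pairing e1 e2.
Qed.

Lemma big4_lin n (F G H K : 'I_n -> 'I_n -> 'I_n -> 'I_n -> int) :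
  \sum_a \sum_b \sum_a' \sum_b' (F a b a' b' - G a b a' b' - H a b a' b' + K a b a' b')
  = \sum_a \sum_b \sum_a' \sum_b' F a b a' b' - \sum_a \sum_b \sum_a' \sum_b' G a b a' b'
    - \sum_a \sum_b \sum_a' \sum_b' H a b a' b' + \sum_a \sum_b \sum_a' \sum_b' K a b a' b'.
Proof.
rewrite -!sumrB -big_split; apply: eq_bigr => a _.
rewrite -!sumrB -big_split; apply: eq_bigr => b _.
rewrite -!sumrB -big_split; apply: eq_bigr => a' _.
by rewrite -!sumrB -big_split.
Qed.

Lemma sq_sum n (F : 'I_n -> int) : \sum_i \sum_j F i * F j = (\sum_i F i) ^+ 2.
Proof. by rewrite expr2 mulr_suml; apply: eq_bigr => x _; rewrite mulr_sumr. Qed.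

Lemma T1 n (c : 'I_n -> 'I_n -> int) :
  \sum_a \sum_b \sum_a' \sum_b' c a b * c a' b' = (\sum_a \sum_b c a b) ^+ 2.
Proof.
rewrite expr2 mulr_suml; apply: eq_bigr => a _; rewrite mulr_suml.
apply: eq_bigr => b _; rewrite mulr_sumr; apply: eq_bigr => a' _.
by rewrite mulr_sumr.
Qed.

Lemma T2 n (c : 'I_n -> 'I_n -> int) :
  \sum_a \sum_b \sum_a' \sum_b' (c a b * c a' b' * (a == a')%:R)
   = \sum_a (\sum_b c a b) ^+ 2.
Proof.
apply: eq_bigr => a _; rewrite -sq_sum; apply: eq_bigr => b _.
rewrite (bigD1 a) //= [X in _ + X]big1 ?addr0.
  by apply: eq_bigr => b' _; rewrite eqxx mulr1.
move=> a' /negbTE; rewrite eq_sym => h; apply: big1 => b' _.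
by rewrite h mulr0.
Qed.

Lemma T3 n (c : 'I_n -> 'I_n -> int) :
  \sum_a \sum_b \sum_a' \sum_b' (c a b * c a' b' * (b == b')%:R)
   = \sum_b (\sum_a c a b) ^+ 2.
Proof.
transitivity (\sum_a \sum_b \sum_a' c a b * c a' b).
  apply: eq_bigr => a _; apply: eq_bigr => b _; apply: eq_bigr => a' _.
  rewrite (bigD1 b) //= eqxx mulr1 big1 ?addr0 // => b' /negbTE.
  by rewrite eq_sym => ->; rewrite mulr0.
rewrite exchange_big; apply: eq_bigr => b _; by rewrite sq_sum.
Qed.

Lemma T4 n (c : 'I_n -> 'I_n -> int) (hc : forall a b, c a b * c a b = c a b) :
  \sum_a \sum_b \sum_a' \sum_b' (c a b * c a' b' * ((a == a') && (b == b'))%:R)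
   = \sum_a \sum_b c a b.
Proof.
apply: eq_bigr => a _; apply: eq_bigr => b _.
rewrite (bigD1 a) //= [X in _ + X]big1 ?addr0.
  rewrite (bigD1 b) //= !eqxx mulr1 hc big1 ?addr0 // => b' /negbTE.
  by rewrite eq_sym => ->; rewrite andbF mulr0.
move=> a' /negbTE; rewrite eq_sym => h; apply: big1 => b' _.
by rewrite h mulr0.
Qed.

Lemma count_id n (c : 'I_n -> 'I_n -> int) (hc : forall a b, c a b * c a b = c a b) :
  \sum_a \sum_b \sum_a' \sum_b' (c a b * c a' b' * ((a != a') && (b != b'))%:R)
  = (\sum_a \sum_b c a b) ^+ 2 - \sum_a (\sum_b c a b) ^+ 2
    - \sum_b (\sum_a c a b) ^+ 2 + \sum_a \sum_b c a b.
Proof.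
rewrite -T1 -T2 -T3 -(T4 hc) -big4_lin.
do 4! (apply: eq_bigr => ? _).
case: (_ == _); case: (_ == _); rewrite /=; ring.
Qed.

Lemma sum_pair (I J : finType) (H : I * J -> int) :
  \sum_q H q = \sum_i \sum_j H (i, j).
Proof. by rewrite pair_bigA; apply: eq_bigr => [[i j]]. Qed.

Definition chi n (w : 'M[nat]_n) (a b : 'I_n) : int := (pos w (a, b))%:R.

Lemma card_D n (w : 'M[nat]_n) :
  (2 * #|Dset w|)%N%:R = \sum_a \sum_b \sum_a' \sum_b'
     (chi w a b * chi w a' b' * ((a != a') && (b != b'))%:R).
Proof.
pose E := [set q : ('I_n * 'I_n) * ('I_n * 'I_n) |
  [&& q.1.1 != q.2.1, q.1.2 != q.2.2, pos w q.1 & pos w q.2]].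
pose A := [set q : ('I_n * 'I_n) * ('I_n * 'I_n) | (q.1.1 < q.2.1)%N].
pose sw := fun q : ('I_n * 'I_n) * ('I_n * 'I_n) => (q.2, q.1).
have swK : involutive sw by case.
have h1 : E :&: A = Dset w.
  apply/setP => -[[a b] [a' b']]; rewrite !inE /=.
  case: (ltngtP a a') => h; rewrite ?andbF ?andbT //=.
  by rewrite neq_ltn h.
have h2 : E :\: A = sw @^-1: Dset w.
  apply/setP => -[[a b] [a' b']]; rewrite !inE /=.
  case: (ltngtP a a') => h; rewrite ?andbF ?andbT //=.
  - by rewrite neq_ltn h orbT /= [b' == b]eq_sym; case: (pos w (a, b)); case: (pos w (a', b')); rewrite /= ?andbF.
  - by move/val_inj: h => ->; rewrite eqxx.
have hE : #|E| = (2 * #|Dset w|)%N.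
  by rewrite -(cardsID A E) h1 h2 card_preimset ?addnn ?mul2n //; apply: inv_inj.
rewrite -hE -sum1_card natr_sum big_mkcond /= sum_pair.
rewrite sum_pair; apply: eq_bigr => a _; apply: eq_bigr => b _.
rewrite sum_pair; apply: eq_bigr => a' _; apply: eq_bigr => b' _. rewrite inE /= /chi.
case: (pos w (a, b)); case: (pos w (a', b')); rewrite /= ?andbF ?andbT //=;
  by case: (_ && _).
Qed.
Lemma cs n (F : 'I_n -> int) : (\sum_i F i) ^+ 2 <= n%:R * \sum_i F i ^+ 2.
Proof.
have h0 : 0 <= \sum_(i < n) \sum_(j < n) (F i - F j) ^+ 2.
  by apply: sumr_ge0 => i _; apply: sumr_ge0 => j _; apply: sqr_ge0.
have e0 : \sum_(i < n) \sum_(j < n) (F i - F j) ^+ 2 =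
   \sum_(i < n) \sum_(j < n) (F i ^+ 2 + F j ^+ 2 - 2 * (F i * F j)).
  by apply: eq_bigr => i _; apply: eq_bigr => j _; ring.
have e1 : \sum_(i < n) \sum_(j < n) (F i ^+ 2 + F j ^+ 2 - 2 * (F i * F j)) =
   \sum_(i < n) \sum_(j < n) F i ^+ 2 + \sum_(i < n) \sum_(j < n) F j ^+ 2 - 2 * \sum_(i < n) \sum_(j < n) (F i * F j).
  rewrite !mulr_sumr -big_split -sumrB; apply: eq_bigr => i _.
  rewrite mulr_sumr -big_split -sumrB //=.
have e2 : \sum_i \sum_(j < n) F i ^+ 2 = n%:R * \sum_i F i ^+ 2.
  rewrite mulr_sumr; apply: eq_bigr => i _; by rewrite sumr_const card_ord mulr_natl.
have e3 : \sum_(i < n) \sum_j F j ^+ 2 = n%:R * \sum_i F i ^+ 2.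
  by rewrite sumr_const card_ord mulr_natl.
rewrite e0 e1 e2 e3 sq_sum in h0.
lia.
Qed.

Lemma chi_idem n (w : 'M[nat]_n) a b : chi w a b * chi w a b = chi w a b.
Proof. by rewrite /chi; case: (pos w (a, b)); rewrite ?mulr0 ?mulr1. Qed.

Lemma two_deg n r (w : 'M[nat]_n) : is_vertex n r w ->
  (2 * deg n r w)%N%:R = (\sum_a \sum_b chi w a b) ^+ 2 - \sum_a (\sum_b chi w a b) ^+ 2
    - \sum_b (\sum_a chi w a b) ^+ 2 + \sum_a \sum_b chi w a b.
Proof. by move=> hw; rewrite deg_eq // card_D count_id // => a b; apply: chi_idem. Qed.

Lemma chi_le n r (w : 'M[nat]_n) : is_vertex n r w ->
  (forall a, \sum_b chi w a b <= r%:R) /\ (forall b, \sum_a chi w a b <= r%:R).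
Proof.
rewrite vertexZ => /andP [/forallP hr /forallP hc].
have hle : forall a b, chi w a b <= tZ w a b.
  move=> a b; rewrite /chi /pos mxE /=; case: (ltnP 0 (w a b)) => h /=; lia.
split.
  by move=> a; rewrite natz -(eqP (hr a)); apply: ler_sum => b _; exact: hle.
by move=> b; rewrite natz -(eqP (hc b)); apply: ler_sum => a _; exact: hle.
Qed.

Lemma test (d n r : nat) : (2 * d)%:R = ((n * r)%:R : int) ^+ 2 - (r%:R ^+ 2) *+ n - (r%:R ^+ 2) *+ n + (n * r)%:R ->
   (2 * d + 2 * n * r * r = n * r * (n * r) + n * r)%N.
Proof.
move=> H; apply/eqP; rewrite -eqz_nat PoszD; apply/eqP.
rewrite -[Posz (2 * d)]natz -[Posz (2 * n * r * r)]natz -[Posz (_ + _)]natz H.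
rewrite -[_ *+ n]mulr_natl !natrD !natrM. ring.
Qed.

Lemma deg_v n r (v : 'M[nat]_n) : is_vertex n r v ->
  (forall i j : 'I_n, (0 < v i j)%N -> v i j = 1%N) ->
  (2 * deg n r v + 2 * n * r * r = n * r * (n * r) + n * r)%N.
Proof.
move=> hv h01; apply: test.
have hchi : forall a b, chi v a b = (v a b)%:R.
  move=> a b; rewrite /chi /pos /=; case: (ltnP 0 (v a b)) => h.
    by rewrite h01.
  by move: h; rewrite leqn0 => /eqP ->.
have hrow : forall a, \sum_b chi v a b = r%:R.
  move=> a; move: (hv); rewrite vertexZ => /andP [/forallP /(_ a) /eqP h _].
  by rewrite natz -h; apply: eq_bigr => b _; rewrite mxE hchi natz.
have hcol : forall b, \sum_a chi v a b = r%:R.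
  move=> b; move: (hv); rewrite vertexZ => /andP [_ /forallP /(_ b) /eqP h].
  by rewrite natz -h; apply: eq_bigr => a _; rewrite mxE hchi natz.
have hP : (r%:R : int) *+ n = (n * r)%:R by rewrite natrM mulr_natl.
rewrite two_deg // (eq_bigr _ (fun a _ => hrow a)).
rewrite (eq_bigr _ (fun a _ => congr1 (fun x => x ^+ 2) (hrow a))).
rewrite (eq_bigr _ (fun b _ => congr1 (fun x => x ^+ 2) (hcol b))).
by rewrite !sumr_const !card_ord hP.
Qed.

Lemma key n r (v w : 'M[nat]_n) : is_vertex n r v ->
  (forall i j : 'I_n, (0 < v i j)%N -> v i j = 1%N) ->
  is_vertex n r w -> (deg n r w <= deg n r v)%N.
Proof.
move=> hv h01 hw.
case: (leqP n 1) => hn.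
  rewrite (deg_eq hw) (_ : Dset w = set0) ?cards0 //; apply/setP => -[[a b] [k l]].
  rewrite !inE /=; apply/negbTE; apply/negP => /and4P [h _ _ _].
  have := ltn_ord k; lia.
have Ev := deg_v hv h01.
have Ew := two_deg hw.
move: (deg n r w) (deg n r v) Ev Ew => dw dv Ev Ew.
have [hp hq] := chi_le hw.
set P := \sum_a \sum_b chi w a b in Ew.
have hchi0 : forall a b, 0 <= chi w a b by move=> a b; rewrite /chi ler0n.
have hP0 : 0 <= P by apply: sumr_ge0 => a _; apply: sumr_ge0.
have hPN : P <= (n * r)%:R.
  apply: le_trans (ler_sum _ (fun a _ => hp a)) _.
  by rewrite sumr_const card_ord natrM mulr_natl.
have cs1 := cs (fun a => \sum_b chi w a b).
have cs2 := cs (fun b => \sum_a chi w a b).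
rewrite /= exchange_big /= -/P in cs2.
rewrite -/P in cs1.
set S2 := \sum_a (\sum_b chi w a b) ^+ 2 in Ew cs1.
set S3 := \sum_b (\sum_a chi w a b) ^+ 2 in Ew cs2.
have EvZ : ((2 * dv)%N%:R : int) =
    (n%:R * r%:R) ^+ 2 + n%:R * r%:R - 2 * n%:R * r%:R * r%:R.
  have := congr1 (fun k => k%:R : int) Ev; rewrite /= !natrD !natrM => E.
  rewrite -[X in X = _](addrK (2%:R * n%:R * r%:R * r%:R)) E; ring.
have hm : (2 : int) <= n%:R by rewrite ler_nat.
suff : (n * (2 * dw) <= n * (2 * dv))%N.
  by rewrite leq_pmul2l ?leq_pmul2l //; lia.
suff H : (n%:R * (2 * dw)%N%:R : int) <= n%:R * (2 * dv)%N%:R.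
  by move: H; rewrite -natrM -natrM ler_nat.
rewrite Ew EvZ -subr_ge0.
set N := (n * r)%:R in hPN.
have hN : N = n%:R * r%:R by rewrite /N natrM.
have h1 : 0 <= (n%:R - 2) * ((N - P) * (N + P)).
  apply: mulr_ge0; first by rewrite subr_ge0.
  apply: mulr_ge0; first by rewrite subr_ge0.
  by apply: addr_ge0; rewrite // /N ler0n.
have h2 : 0 <= n%:R * (N - P) by apply: mulr_ge0; rewrite ?ler0n ?subr_ge0.
have h3 : 0 <= n%:R * S2 - P ^+ 2 by rewrite subr_ge0.
have h4 : 0 <= n%:R * S3 - P ^+ 2 by rewrite subr_ge0.
have -> : n%:R * ((n%:R * r%:R) ^+ 2 + n%:R * r%:R - 2 * n%:R * r%:R * r%:R) -
    n%:R * (P ^+ 2 - S2 - S3 + P) =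
    (n%:R - 2) * ((N - P) * (N + P)) + n%:R * (N - P) + (n%:R * S2 - P ^+ 2)
     + (n%:R * S3 - P ^+ 2).
  rewrite hN; ring.
by do 3! (apply: addr_ge0 => //).
Qed.

Unset Implicit Arguments.
Local Close Scope ring_scope.

Theorem proposition2p3 (n r : nat) (hn : (1 <= n)%N) (hr : (1 <= r)%N)
  (v : 'M[nat]_n) (hv : is_vertex n r v)
  (h01 : forall i j : 'I_n, (0 < v i j)%N -> v i j = 1%N) :
  maxdeg n r = deg n r v /\
  ((deg n r v)%:R : rat) =
    ((n * r)%:R * ((n * r)%:R - 2 * r%:R + 1) / 2)%R.
Proof.
pose u0 : 'M['I_r.+1]_n := map_mx inord v.
have hu0 : emb' u0 = v.
  by apply/matrixP => a b; rewrite !mxE inordK // ltnS; apply: vertex_le hv.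
split.
  rewrite /maxdeg; apply/eqP; rewrite eqn_leq; apply/andP; split.
    by apply/bigmax_leqP => u hu; apply: key.
  have := @leq_bigmax_cond _ (fun u : 'M['I_r.+1]_n => is_vertex n r (emb' u))
    (fun u => deg n r (emb' u)) u0.
  by rewrite hu0; apply.
have Ev := deg_v hv h01.
move: (deg n r v) Ev => d Ev.
have E : (((2 * d + 2 * n * r * r)%N)%:R = ((n * r * (n * r) + n * r)%N)%:R :> rat)%R.
  by rewrite Ev.
rewrite [LHS]natrD [RHS]natrD (natrM _ 2 d) !natrM in E.
apply: (@mulfI _ (2%:R : rat)%R); first by rewrite pnatr_eq0.
rewrite -[X in X = _](addrK (2%:R * n%:R * r%:R * r%:R : rat)%R) E (natrM _ n r).
field; by [].
Qed.
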